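(* For all $\lambda$-terms $M,N$: $M\simeq_{\beta_v}N$ iff $M^v\simeq_b N^v$.
   Context: Bang calculus. The set $!\Lambda$ of terms is $T,S ::= x \mid \lambda x.T \mid T\,S \mid \mathrm{der}\,T \mid\ !T$; $\lambda$ the only binder, up to $\alpha$-conversion, $T\{S/x\}$ capture-avoiding substitution. Contexts: $C ::= [\cdot] \mid \lambda x.C \mid C\,T \mid T\,C \mid \mathrm{der}\,C \mid\ !C$. Root steps $(\lambda x.T)(!S)\mapsto_v T\{S/x\}$, $\mathrm{der}(!T)\mapsto_d T$; $\to_b$ is the closure of $\mapsto_v\cup\mapsto_d$ under contexts. $\lambda$-calculus: $M ::= V\mid MN$, values $V ::= x\mid\lambda x.M$; $\to_{\beta_v}$ is the closure of $(\lambda x.M)V\mapsto_{\beta_v}M\{V/x\}$ ($V$ a value) under $\lambda$-contexts $C ::= [\cdot]\mid\lambda x.C\mid C\,M\mid M\,C$. CbV translation: $x^v=\,!x$, $(\lambda x.M)^v=\,!(\lambda x.M^v)$, $(MN)^v=(\mathrm{der}\,M^v)\,N^v$. For a relation $\to_r$, $\simeq_r$ denotes its reflexive-symmetric-transitive closure. *)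

(* Defs.v *)
(* Terms are represented with de Bruijn indices, which
   realizes "terms up to alpha-conversion" with capture-avoiding substitution. *)
From Stdlib Require Import Arith Relations.

Inductive lterm : Type :=
| LVar : nat -> lterm
| LLam : lterm -> lterm
| LApp : lterm -> lterm -> lterm.

Fixpoint llift (c d : nat) (t : lterm) : lterm :=
  match t with
  | LVar n => if n <? c then LVar n else LVar (n + d)
  | LLam t => LLam (llift (S c) d t)
  | LApp t u => LApp (llift c d t) (llift c d u)
  end.

Fixpoint lsubst (k : nat) (u : lterm) (t : lterm) : lterm :=
  match t with
  | LVar n => if n <? k then LVar n
              else if n =? k then llift 0 k u else LVar (n - 1)
  | LLam t => LLam (lsubst (S k) u t)
  | LApp t1 t2 => LApp (lsubst k u t1) (lsubst k u t2)
  end.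

Definition is_value (t : lterm) : Prop :=
  match t with LVar _ | LLam _ => True | LApp _ _ => False end.

Inductive beta_v : lterm -> lterm -> Prop :=
| bv_root : forall M V, is_value V -> beta_v (LApp (LLam M) V) (lsubst 0 V M)
| bv_lam : forall M M', beta_v M M' -> beta_v (LLam M) (LLam M')
| bv_appl : forall M M' N, beta_v M M' -> beta_v (LApp M N) (LApp M' N)
| bv_appr : forall M N N', beta_v N N' -> beta_v (LApp M N) (LApp M N').

Inductive bterm : Type :=
| BVar : nat -> bterm
| BLam : bterm -> bterm
| BApp : bterm -> bterm -> bterm
| BDer : bterm -> bterm
| BBang : bterm -> bterm.

Fixpoint blift (c d : nat) (t : bterm) : bterm :=
  match t with
  | BVar n => if n <? c then BVar n else BVar (n + d)
  | BLam t => BLam (blift (S c) d t)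
  | BApp t u => BApp (blift c d t) (blift c d u)
  | BDer t => BDer (blift c d t)
  | BBang t => BBang (blift c d t)
  end.

Fixpoint bsubst (k : nat) (u : bterm) (t : bterm) : bterm :=
  match t with
  | BVar n => if n <? k then BVar n
              else if n =? k then blift 0 k u else BVar (n - 1)
  | BLam t => BLam (bsubst (S k) u t)
  | BApp t1 t2 => BApp (bsubst k u t1) (bsubst k u t2)
  | BDer t => BDer (bsubst k u t)
  | BBang t => BBang (bsubst k u t)
  end.

Inductive bstep : bterm -> bterm -> Prop :=
| b_v : forall T S, bstep (BApp (BLam T) (BBang S)) (bsubst 0 S T)
| b_d : forall T, bstep (BDer (BBang T)) T
| b_lam : forall T T', bstep T T' -> bstep (BLam T) (BLam T')
| b_appl : forall T T' S, bstep T T' -> bstep (BApp T S) (BApp T' S)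
| b_appr : forall T S S', bstep S S' -> bstep (BApp T S) (BApp T S')
| b_der : forall T T', bstep T T' -> bstep (BDer T) (BDer T')
| b_bang : forall T T', bstep T T' -> bstep (BBang T) (BBang T').

Fixpoint cbv (t : lterm) : bterm :=
  match t with
  | LVar n => BBang (BVar n)
  | LLam M => BBang (BLam (cbv M))
  | LApp M N => BApp (BDer (cbv M)) (cbv N)
  end.

Definition beta_v_eq : lterm -> lterm -> Prop := clos_refl_sym_trans lterm beta_v.
Definition b_eq : bterm -> bterm -> Prop := clos_refl_sym_trans bterm bstep.

(* Main.v *)
Require Import Defs.
From Stdlib Require Import Arith Relations Lia.

Ltac crush := repeat (simpl; match goal with
 | |- context [?a <? ?b] => destruct (Nat.ltb_spec a b)
 | |- context [?a =? ?b] => destruct (Nat.eqb_spec a b)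
 end); try lia; try (f_equal; lia).

Lemma blift_blift : forall t c d c' d', c' <= c ->
  blift c' d' (blift c d t) = blift (c + d') d (blift c' d' t).
Proof. induction t; intros; simpl; try (f_equal; auto; fail).
  - crush.
  - f_equal. apply (IHt (S c) d (S c') d'). lia.
Qed.

Lemma blift_merge : forall t c c' d d', c <= c' -> c' <= c + d ->
  blift c' d' (blift c d t) = blift c (d + d') t.
Proof. induction t; intros; simpl; try (f_equal; auto; fail).
  - crush.
  - f_equal. apply IHt; lia.
Qed.

Lemma bsubst_cancel : forall t u c k d, c <= k -> k <= c + d ->
  bsubst k u (blift c (S d) t) = blift c d t.
Proof. induction t; intros; simpl; try (f_equal; auto; fail).
  - crush.
  - f_equal. apply IHt; lia.
Qed.

Lemma blift_bsubst_a : forall t u c d k, k <= c ->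
  blift c d (bsubst k u t) = bsubst k (blift (c - k) d u) (blift (S c) d t).
Proof. induction t; intros; simpl; try (f_equal; auto; fail).
  - crush. subst. match goal with |- context [blift 0 ?m u] => rewrite (blift_blift u (c - m) d 0 m) by lia end.
    f_equal. lia.
  - f_equal. rewrite IHt by lia. reflexivity.
Qed.

Lemma blift_bsubst_b : forall t u c d k, c <= k ->
  blift c d (bsubst k u t) = bsubst (k + d) u (blift c d t).
Proof. induction t; intros; simpl; try (f_equal; auto; fail).
  - crush. subst. apply blift_merge; lia.
  - f_equal. rewrite IHt by lia. reflexivity.
Qed.

Lemma bsubst_bsubst : forall t u v j k, j <= k ->
  bsubst k u (bsubst j v t) = bsubst j (bsubst (k - j) u v) (bsubst (S k) u t).
Proof. induction t; intros u v j k Hjk; simpl; try (f_equal; auto; fail).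
  - crush.
    + subst. rewrite (blift_bsubst_b v u 0 j (k - j)) by lia.
      f_equal. lia.
    + subst. symmetry. apply (bsubst_cancel u _ 0 j); lia.
  - f_equal. rewrite IHt by lia. reflexivity.
Qed.

Inductive par : bterm -> bterm -> Prop :=
| p_var : forall n, par (BVar n) (BVar n)
| p_lam : forall t t', par t t' -> par (BLam t) (BLam t')
| p_app : forall t t' u u', par t t' -> par u u' -> par (BApp t u) (BApp t' u')
| p_der : forall t t', par t t' -> par (BDer t) (BDer t')
| p_bang : forall t t', par t t' -> par (BBang t) (BBang t')
| p_v : forall t t' u u', par t t' -> par u u' -> par (BApp (BLam t) (BBang u)) (bsubst 0 u' t')
| p_d : forall t t', par t t' -> par (BDer (BBang t)) t'.
#[local] Hint Constructors par : core.

Lemma par_refl : forall t, par t t.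
Proof. induction t; auto. Qed.
#[local] Hint Resolve par_refl : core.

Lemma par_lift : forall t t', par t t' -> forall c d, par (blift c d t) (blift c d t').
Proof. induction 1; intros; simpl; auto.
  rewrite blift_bsubst_a by lia. rewrite Nat.sub_0_r. auto.
Qed.

Lemma par_subst : forall t t', par t t' -> forall u u' k, par u u' ->
  par (bsubst k u t) (bsubst k u' t').
Proof. induction 1; intros; simpl; auto.
  - destruct (n <? k); auto. destruct (n =? k); auto. apply par_lift; auto.
  - rewrite bsubst_bsubst by lia. rewrite Nat.sub_0_r. auto.
Qed.

Fixpoint dev (t : bterm) : bterm :=
 match t with
 | BVar n => BVar n
 | BLam a => BLam (dev a)
 | BApp a b => match a, b with
     | BLam a1, BBang b1 => bsubst 0 (dev b1) (dev a1)
     | _, _ => BApp (dev a) (dev b) end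
 | BDer a => match a with BBang a1 => dev a1 | _ => BDer (dev a) end
 | BBang a => BBang (dev a)
 end.

Lemma par_dev : forall t t', par t t' -> par t' (dev t).
Proof. induction 1; simpl; auto.
  - destruct t; try (apply p_app; assumption).
    destruct u; try (apply p_app; assumption).
    inversion H; inversion H0; subst. simpl in IHpar1, IHpar2.
    inversion IHpar1; inversion IHpar2; subst. apply p_v; auto.
  - destruct t; try (apply p_der; assumption).
    inversion H; subst. simpl in IHpar. inversion IHpar; subst. auto.
  - apply par_subst; auto.
Qed.

Definition parS := clos_refl_trans_1n bterm par.

Lemma strip : forall x z, parS x z -> forall y, par x y -> exists w, parS y w /\ par z w.
Proof. induction 1; intros.
  - exists y; split; [constructor|auto].
  - destruct (IHclos_refl_trans_1n (dev x)) as [w [H2 H3]]. apply par_dev; auto.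
    exists w; split; auto. econstructor. apply par_dev. eauto. auto.
Qed.

Lemma conf : forall x y, parS x y -> forall z, parS x z -> exists w, parS y w /\ parS z w.
Proof. induction 1; intros.
  - match goal with H : parS _ ?z |- _ => exists z; split; [auto|constructor] end.
  - destruct (strip _ _ H1 _ H) as [w1 [H2 H3]].
    destruct (IHclos_refl_trans_1n _ H2) as [w [H4 H5]].
    exists w; split; auto. econstructor; eauto.
Qed.

Lemma parS_trans : forall x y z, parS x y -> parS y z -> parS x z.
Proof. intros. apply clos_rt_rt1n. eapply rt_trans; apply clos_rt1n_rt; eauto. Qed.

Lemma cr : forall x y, clos_refl_sym_trans bterm par x y -> exists w, parS x w /\ parS y w.
Proof. induction 1.
  - exists y; split; [econstructor; eauto; constructor|constructor].
  - exists x; split; constructor.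
  - destruct IHclos_refl_sym_trans as [w [? ?]]; eauto.
  - destruct IHclos_refl_sym_trans1 as [w1 [? ?]].
    destruct IHclos_refl_sym_trans2 as [w2 [? ?]].
    destruct (conf _ _ H2 _ H3) as [w [? ?]].
    exists w; split; eapply parS_trans; eauto.
Qed.

Lemma bstep_par : forall t t', bstep t t' -> par t t'.
Proof. induction 1; auto. Qed.

Definition bS := clos_refl_trans bterm bstep.

Lemma rt_map {A B} (f : A -> B) (R : A -> A -> Prop) (S : B -> B -> Prop) :
  (forall x y, R x y -> S (f x) (f y)) ->
  forall x y, clos_refl_trans A R x y -> clos_refl_trans B S (f x) (f y).
Proof. intros Hf x y H. induction H; eauto using rt_step, rt_refl, rt_trans. Qed.

Lemma ctx (f : bterm -> bterm) : (forall x y, bstep x y -> bstep (f x) (f y)) ->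
  forall x y, bS x y -> bS (f x) (f y).
Proof. intros H. apply rt_map. exact H. Qed.

Lemma par_bS : forall t t', par t t' -> bS t t'.
Proof. induction 1.
  - apply rt_refl.
  - apply (ctx BLam); auto. intros; constructor; auto.
  - apply rt_trans with (BApp t' u).
    apply (ctx (fun x => BApp x u)); auto. intros; constructor; auto.
    apply (ctx (fun x => BApp t' x)); auto. intros; constructor; auto.
  - apply (ctx BDer); auto. intros; constructor; auto.
  - apply (ctx BBang); auto. intros; constructor; auto.
  - apply rt_trans with (BApp (BLam t') (BBang u')); [apply rt_trans with (BApp (BLam t') (BBang u))|].
    apply (ctx (fun x => BApp (BLam x) (BBang u))); auto. intros; do 2 constructor; auto.
    apply (ctx (fun x => BApp (BLam t') (BBang x))); auto. intros; do 2 constructor; auto.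
    apply rt_step. constructor.
  - apply rt_trans with (BDer (BBang t')).
    apply (ctx (fun x => BDer (BBang x))); auto. intros; do 2 constructor; auto.
    apply rt_step. constructor.
Qed.

Lemma parS_bS : forall x y, parS x y -> bS x y.
Proof. induction 1. apply rt_refl. eapply rt_trans; eauto. apply par_bS; auto. Qed.

Lemma b_eq_join : forall x y, b_eq x y -> exists w, bS x w /\ bS y w.
Proof. intros. assert (clos_refl_sym_trans bterm par x y).
  { induction H; eauto using rst_step, rst_refl, rst_sym, rst_trans, bstep_par. }
  destruct (cr _ _ H0) as [w [? ?]]. exists w; split; apply parS_bS; auto.
Qed.

Definition isVL (t : bterm) : Prop :=
  match t with BVar _ | BLam _ => True | _ => False end.

Fixpoint good (t : bterm) : Prop :=
  match t with
  | BVar _ => True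
  | BLam a => good a
  | BApp a b => good a /\ good b
  | BDer a => good a
  | BBang a => isVL a /\ good a
  end.

Lemma isVL_lift : forall t c d, isVL t -> isVL (blift c d t).
Proof. destruct t; simpl; intros; auto. destruct (n <? c); simpl; auto. Qed.

Lemma good_lift : forall t c d, good t -> good (blift c d t).
Proof. induction t; simpl; intros; intuition auto using isVL_lift.
  destruct (n <? c); simpl; auto. Qed.

Lemma good_subst : forall t u k, isVL u -> good u -> good t -> good (bsubst k u t).
Proof. induction t; simpl; intros; intuition auto.
  - destruct (n <? k); simpl; auto. destruct (n =? k); simpl; auto using good_lift.
  - destruct t; simpl in *; auto.
    destruct (n <? k); simpl; auto. destruct (n =? k); simpl; auto using isVL_lift.
Qed.

Lemma good_step : forall t t', bstep t t' -> good t -> good t'.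
Proof. induction 1; simpl; intros; intuition auto.
  apply good_subst; auto.
  destruct T; simpl in *; try contradiction; inversion H; auto.
Qed.

Fixpoint phi (t : bterm) : lterm :=
  match t with
  | BVar n => LVar n
  | BLam a => LLam (phi a)
  | BApp a b => LApp (phi a) (phi b)
  | BDer a => phi a
  | BBang a => phi a
  end.

Lemma phi_lift : forall t c d, phi (blift c d t) = llift c d (phi t).
Proof. induction t; simpl; intros; try congruence. destruct (n <? c); reflexivity. Qed.

Lemma phi_subst : forall t u k, phi (bsubst k u t) = lsubst k (phi u) (phi t).
Proof. induction t; simpl; intros; try congruence.
  destruct (n <? k); auto. destruct (n =? k); auto. apply phi_lift. Qed.

Definition lS := clos_refl_trans lterm beta_v.

Lemma lctx (f : lterm -> lterm) : (forall x y, beta_v x y -> beta_v (f x) (f y)) ->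
  forall x y, lS x y -> lS (f x) (f y).
Proof. intros H. apply rt_map. exact H. Qed.

Lemma phi_step : forall t t', bstep t t' -> good t -> lS (phi t) (phi t').
Proof. unfold lS; induction 1; simpl; intros.
  - rewrite phi_subst. apply rt_step. apply bv_root.
    destruct H as [_ [HS _]]. destruct S; simpl in *; auto; contradiction.
  - apply rt_refl.
  - apply (lctx LLam). intros; constructor; auto. apply IHbstep; auto.
  - apply (lctx (fun x => LApp x (phi S))). intros; constructor; auto. apply IHbstep. apply H0.
  - apply (lctx (fun x => LApp (phi T) x)). intros; constructor; auto. apply IHbstep. apply H0.
  - auto.
  - apply IHbstep. apply H0.
Qed.

Lemma phi_steps : forall t t', bS t t' -> good t -> lS (phi t) (phi t') /\ good t'.
Proof. induction 1; intros.
  - split; [apply phi_step|eapply good_step]; eauto.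
  - split; auto. apply rt_refl.
  - destruct IHclos_refl_trans1 as [? ?]; auto.
    destruct IHclos_refl_trans2 as [? ?]; auto.
    split; auto. eapply rt_trans; eauto.
Qed.

Lemma good_cbv : forall M, good (cbv M).
Proof. induction M; simpl; auto. Qed.

Lemma phi_cbv : forall M, phi (cbv M) = M.
Proof. induction M; simpl; congruence. Qed.

Definition vo (t : lterm) : bterm :=
  match t with LVar n => BVar n | LLam M => BLam (cbv M) | LApp _ _ => BVar 0 end.

Lemma cbv_lift : forall M c d, cbv (llift c d M) = blift c d (cbv M).
Proof. induction M; simpl; intros; try congruence. destruct (n <? c); reflexivity. Qed.

Lemma cbv_subst : forall M V k, is_value V ->
  cbv (lsubst k V M) = bsubst k (vo V) (cbv M).
Proof. induction M; simpl; intros; try congruence.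
  - destruct (n <? k); auto. destruct (n =? k); auto.
    destruct V; simpl in *; try contradiction.
    + destruct (n0 <? 0); reflexivity.
    + rewrite cbv_lift. reflexivity.
  - rewrite IHM; auto.
  - rewrite IHM1, IHM2; auto.
Qed.

Lemma fwd_step : forall M N, beta_v M N -> bS (cbv M) (cbv N).
Proof. induction 1; simpl.
  - apply rt_trans with (BApp (BLam (cbv M)) (cbv V)).
    apply rt_step. do 2 constructor.
    apply rt_step. rewrite cbv_subst by auto.
    destruct V; simpl in *; try contradiction; constructor.
  - apply (ctx (fun x => BBang (BLam x))); auto. intros; do 2 constructor; auto.
  - apply (ctx (fun x => BApp (BDer x) (cbv N))); auto. intros; do 2 constructor; auto.
  - apply (ctx (fun x => BApp (BDer (cbv M)) x)); auto. intros; constructor; auto.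
Qed.

Lemma rt_rst {A} (R : A -> A -> Prop) x y :
  clos_refl_trans A R x y -> clos_refl_sym_trans A R x y.
Proof. induction 1; eauto using rst_step, rst_refl, rst_trans. Qed.

Theorem mainTheorem10 : forall M N : lterm, beta_v_eq M N <-> b_eq (cbv M) (cbv N).
Proof. intros M N; split; intro H.
  - induction H.
    + apply rt_rst. apply fwd_step; auto.
    + apply rst_refl.
    + apply rst_sym; auto.
    + eapply rst_trans; eauto.
  - destruct (b_eq_join _ _ H) as [w [H1 H2]].
    destruct (phi_steps _ _ H1 (good_cbv M)) as [H3 _].
    destruct (phi_steps _ _ H2 (good_cbv N)) as [H4 _].
    rewrite phi_cbv in H3, H4.
    eapply rst_trans. apply rt_rst. exact H3. apply rst_sym. apply rt_rst. exact H4.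
Qed.
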